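(* Let $n$ be a positive integer and $G$ a finite subgroup of $\mathrm{GL}_n(A)$, where $A=\mathbb{F}_q[t]$ and $q$ is a power of the prime $p$. Then the largest divisor of $\#G$ prime to $p$ divides $\prod_{s=1}^n(q^s-1)$. *)

(* Defs.v *)
From HB Require Import structures.
From mathcomp Require Import all_boot all_order all_algebra all_field.
From mathcomp Require Import finmap.
Set Implicit Arguments. Unset Strict Implicit. Unset Printing Implicit Defensive.
Import GRing.Theory.
Local Open Scope ring_scope.
Local Open Scope fset_scope.

Definition is_finite_subgroup_GL (F : fieldType) (n : nat)
  (G : {fset 'M[{poly F}]_n}) : Prop :=
  [/\ (1%:M : 'M[{poly F}]_n) \in G,
      (forall M, M \in G -> M \in unitmx),
      (forall M N, M \in G -> N \in G -> M *m N \in G) &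
      (forall M, M \in G -> invmx M \in G)].

(* Main.v *)
Require Import Defs.
From HB Require Import structures.
From mathcomp Require Import all_boot all_order all_algebra all_field all_fingroup all_solvable.
From mathcomp Require Import finmap.
Set Implicit Arguments. Unset Strict Implicit. Unset Printing Implicit Defensive.
Import GRing.Theory.
Local Open Scope fset_scope.

Section GT.
Local Open Scope ring_scope.
Variables (F : finFieldType) (n : nat) (G : {fset 'M[{poly F}]_n.+1}).
Hypothesis hG : is_finite_subgroup_GL G.

Definition GT := fset_sub_type G.
HB.instance Definition _ := Finite.on GT.

Let M1 : (1%:M : 'M[{poly F}]_n.+1) \in G. Proof. by case: hG. Qed.
Let MM (x y : GT) : (val x *m val y) \in G. Proof. by case: hG => _ _ h _; apply: h; apply: valP. Qed.
Let MV (x : GT) : invmx (val x) \in G. Proof. by case: hG => _ _ _ h; apply: h; apply: valP. Qed.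
Let MU (x : GT) : (val x) \in unitmx. Proof. by case: hG => _ h _ _; apply: h; apply: valP. Qed.

Definition gmul (x y : GT) : GT := [` MM x y].
Definition gone : GT := [` M1].
Definition ginv (x : GT) : GT := [` MV x].

Lemma gmulA : associative gmul.
Proof. by move=> x y z; apply: val_inj; rewrite /= mulmxA. Qed.
Lemma gmul1 : left_id gone gmul.
Proof. by move=> x; apply: val_inj; rewrite /= mul1mx. Qed.
Lemma gmulV : left_inverse gone ginv gmul.
Proof. by move=> x; apply: val_inj; rewrite /= mulVmx // MU. Qed.

HB.instance Definition _ := Finite_isGroup.Build GT gmulA gmul1 gmulV.

Lemma valX (x : GT) k : val (x ^+ k)%g = (val x) ^+ k.
Proof.
elim: k => [|k IH]; first by [].
by rewrite expgS GRing.exprS -IH.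
Qed.

Definition ev (M : 'M[{poly F}]_n.+1) : 'M[F]_n.+1 := map_mx (horner_eval 0) M.

Lemma ev_unit (x : GT) : ev (val x) \in unitmx.
Proof.
rewrite unitmxE /ev det_map_mx /= horner_evalE horner_coef0 unitfE.
have := MU x; rewrite unitmxE poly_unitE unitfE => /andP[_ ->] //.
Qed.

Definition phi (x : GT) : {'GL_n.+1[F]} := Sub (ev (val x)) (ev_unit x).

Lemma phiM : {in setT &, {morph phi : x y / (x * y)%g}}.
Proof.
move=> x y _ _; apply: val_inj => /=.
rewrite /ev /= map_mxM. done.
Qed.

Definition phim := @Morphism GT _ setT phi phiM.

Variable p : nat.
Hypothesis hp : prime p.
Hypothesis hch : p \in [pchar F].

Lemma ker_pgroup : (p.-group ('ker phim))%g.
Proof.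
apply/pgroupP => q q_pr qdv.
have [x xK ox] := Cauchy q_pr qdv.
rewrite inE; apply/negP => /negP qp.
have evx : ev (val x) = 1%:M.
  have := mker xK => /(congr1 val) /=.
  done.
have xq : (val x) ^+ q = 1.
  by rewrite -valX -ox expg_order.
set D := val x - 1.
set U := \sum_(i < q) (val x) ^+ i.
have DU : D * U = 0 by rewrite /D /U -subrX1 xq subrr.
have evU : ev U = q%:R%:M.
  rewrite /U /ev raddf_sum /=.
  have evx' : map_mx (horner_eval 0) (val x) = 1 by exact: evx.
  under eq_bigr => i _ do rewrite rmorphXn /= evx' expr1n.
  rewrite sumr_const card_ord.
  by rewrite raddfMn.
have detU : \det U != 0.
  apply: contraNneq (_ : (\det (ev U)) != 0).
    by move=> h; rewrite /ev det_map_mx h rmorph0.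
  rewrite evU det_scalar expf_eq0 /=.
  by rewrite -(dvdn_pcharf hch) dvdn_prime2 // eq_sym.
have D0 : D = 0.
  have : D *m U *m \adj U = 0 by rewrite [D *m U]DU mul0mx.
  rewrite -mulmxA mul_mx_adj mul_mx_scalar => /matrixP h.
  apply/matrixP => i j; have := h i j; rewrite !mxE => /eqP.
  by rewrite mulf_eq0 (negbTE detU) /= => /eqP.
have x1 : x = 1%g.
  by apply: val_inj; apply/eqP; rewrite /= -subr_eq0 -/D D0.
by move: ox; rewrite x1 order1 => q1; rewrite -q1 in q_pr.
Qed.

Variable k : nat.
Hypothesis hq : #|F| = (p ^ k)%N.

Lemma main_dvd :
  ((#|` G|)`_(p^') %| \prod_(1 <= s < n.+2) (#|F| ^ s - 1))%N.
Proof.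
have cardG : #|` G| = #|[set: GT]|.
  by rewrite cardsT cardfE.
set K := ('ker phim)%G.
set H := (phim @* [set: GT])%g.
have L := Lagrange (subsetT K).
have cH : #|H| = #|[set: GT] : K|%g by rewrite card_morphim setIid.
have -> : #|` G| = (#|K| * #|H|)%N by rewrite cardG cH L.
rewrite partnM ?cardG_gt0 // part_p'nat ?mul1n; last by rewrite pnatNK; exact: ker_pgroup.
have dH : (#|H| %| #|'GL_n.+1[F]%g|)%N by apply: cardSg; apply: subsetT.
rewrite card_GL // in dH.
have cop : coprime ((#|H|)`_(p^')) (#|F| ^ 'C(n.+1, 2)).
  rewrite coprime_sym; apply: (@pnat_coprime p); last exact: part_pnat.
  by rewrite hq -expnM pnatX pnat_id ?orbT.
rewrite -(Gauss_dvdr _ cop).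
exact: dvdn_trans (dvdn_part _ _) dH.
Qed.
End GT.

Theorem lemma2p12 (F : finFieldType) (p k n : nat) (hp : prime p)
  (hq : #|F| = (p ^ k)%N) (hn : (0 < n)%N)
  (G : {fset 'M[{poly F}]_n}) (hG : is_finite_subgroup_GL G) :
  ((#|` G|)`_(p^') %| \prod_(1 <= s < n.+1) (#|F| ^ s - 1))%N.
Proof.
case: n hn G hG => [//|n] _ G hG.
exact: (main_dvd hG hp (card_finPcharP hq hp) hq).
Qed.
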